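(* Every Schubert variety $X_w$ ($w\in S_n$) in $GL_n(\mathbb{C})/B$, including $G/B=X_{w_0}$ itself, is Palais–Smale.
   Context: Let $G=GL_n(\mathbb{C})$, $B$ the invertible upper-triangular matrices, and $T$ the diagonal matrices, acting on $G/B$ by left multiplication. Permutations are identified with permutation matrices via $we_i=e_{w(i)}$, and $s_{jk}$ is the transposition of $j$ and $k$. The Schubert variety is $X_w=\overline{BwB/B}$. The Bruhat order is defined by $v\le w$ iff $[v]\in X_w$, and $\ell(w)=\dim X_w$ is the number of pairs $i<j$ with $w^{-1}(i)>w^{-1}(j)$. $w_0$ is the longest permutation. The moment graph of $X_w$ (a GKM variety) has vertices $\{v\in S_n: v\le w\}$ and an (undirected) edge between $v$ and $s_{jk}v$ for every $j<k$ with both $v,s_{jk}v\le w$, labeled by the torus weight $\pm(t_j-t_k)$. A GKM variety is called Palais–Smale if its moment graph can be directed so that there is an edge directed from $v$ to $u$ only if there are more edges directed out of $v$ than out of $u$. *)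

(* Defs.v *)
From mathcomp Require Import all_boot all_order all_fingroup.
Set Implicit Arguments. Unset Strict Implicit. Unset Printing Implicit Defensive.

Open Scope group_scope.

(* Permutations of {0,..,n-1} are elements of 'S_n.  In mathcomp,
   (s * t) x = t (s x) (lemma permM), so the composite s_{jk} o v
   (i.e. the permutation matrix product s_{jk} v) is (v * tperm j k). *)

Definition lmul_transp (n : nat) (j k : 'I_n) (v : 'S_n) : 'S_n :=
  v * tperm j k.

Definition len (n : nat) (w : 'S_n) : nat :=
  #|[set p : 'I_n * 'I_n | (p.1 < p.2)%N && (w^-1 p.2 < w^-1 p.1)%N]|.

Definition bruhat_step (n : nat) : rel 'S_n :=
  fun a b => [exists j : 'I_n, exists k : 'I_n,
                [&& (j < k)%N, b == lmul_transp j k a & (len a < len b)%N]].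

Definition bruhat_le (n : nat) (v w : 'S_n) : bool := connect (@bruhat_step n) v w.

Definition moment_edge (n : nat) (w : 'S_n) (v u : 'S_n) : bool :=
  [&& bruhat_le v w, bruhat_le u w &
      [exists j : 'I_n, exists k : 'I_n, (j < k)%N && (u == lmul_transp j k v)]].

Definition orientation (n : nat) (w : 'S_n) (D : rel 'S_n) : Prop :=
  (forall v u, D v u -> moment_edge w v u) /\
  (forall v u, moment_edge w v u -> D v u || D u v) /\
  (forall v u, D v u -> ~~ D u v).

Definition outdeg (n : nat) (D : rel 'S_n) (v : 'S_n) : nat :=
  #|[set u | D v u]|.

Definition palais_smale (n : nat) (w : 'S_n) : Prop :=
  exists D : rel 'S_n, orientation w D /\
    (forall v u, D v u -> (outdeg D u < outdeg D v)%N).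

(* Main.v *)
Require Import Defs.
From mathcomp Require Import all_boot all_order all_fingroup.
From mathcomp Require Import zify.
Set Implicit Arguments. Unset Strict Implicit. Unset Printing Implicit Defensive.
Open Scope group_scope.

Lemma invtE n (v : 'S_n) (j k x : 'I_n) :
  (v * tperm j k)^-1 x = v^-1 (tperm j k x).
Proof. by rewrite invMg tpermV permM. Qed.

Definition fsw n (j k : 'I_n) (p : 'I_n * 'I_n) : 'I_n * 'I_n :=
  if [&& (j <= p.1)%N, (p.1 <= k)%N, (j <= p.2)%N & (p.2 <= k)%N] then p
  else (tperm j k p.1, tperm j k p.2).

Lemma ord_neq n (a b : 'I_n) : a <> b -> (a : nat) <> b.
Proof. by move=> H E; apply: H; apply: val_inj. Qed.

Lemma tcaseL n (j k a : 'I_n) : [\/ a = j, a = k | [/\ (a : nat) <> j, (a : nat) <> k & tperm j k a = a]].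
Proof.
case: (tpermP j k a) => [?|?|H1 H2]; [by constructor 1|by constructor 2|constructor 3].
by split; [exact: ord_neq H1|exact: ord_neq H2|].
Qed.
Ltac tcase j k a := let Ea := fresh "Ea" in case: (tcaseL j k a) => [?|?|[? ? Ea]]; [subst a|subst a|rewrite ?Ea; clear Ea].

Lemma fsw_inv n (j k : 'I_n) : (j < k)%N -> involutive (fsw j k).
Proof.
move=> jk [a b]; rewrite /fsw /=.
case H: [&& (j <= a)%N, (a <= k)%N, (j <= b)%N & (b <= k)%N]; rewrite /= ?H //.
suff -> : [&& (j <= tperm j k a)%N, (tperm j k a <= k)%N, (j <= tperm j k b)%N & (tperm j k b <= k)%N] = false by rewrite !tpermK.
move: H; tcase j k a; tcase j k b; lia.
Qed.

Lemma len_tperm_lt n (v : 'S_n) (j k : 'I_n) : (j < k)%N ->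
  (v^-1 j < v^-1 k)%N -> (len v < len (v * tperm j k))%N.
Proof.
move=> jk hv; rewrite /len.
set I := [set p : 'I_n * 'I_n | _].
set I' := [set p : 'I_n * 'I_n | _].
have key : forall p, p \in I -> (fsw j k p \in I') && (fsw j k p != (j, k)).
  move=> [a b]; rewrite !inE /= => hab.
  rewrite /fsw /=.
  case H: [&& (j <= a)%N, (a <= k)%N, (j <= b)%N & (b <= k)%N] => /=;
  rewrite !invtE;
  (apply/andP; split; [| apply/negP => /eqP [E1 E2]; move: E1 E2 => /(f_equal val) /= E1 /(f_equal val) /= E2]);
  (try move: E1 E2); move: H hab hv; tcase j k a; tcase j k b; rewrite ?(tpermL, tpermR) //; try lia.
have sub : (j, k) |: (fsw j k @: I) \subset I'.
  apply/subsetP => p; rewrite in_setU1 => /orP[/eqP->|/imsetP[q qI ->]].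
    by rewrite ?inE /= !invtE tpermL tpermR jk.
  by case/andP: (key q qI).
have nin : (j, k) \notin fsw j k @: I.
  apply/negP => /imsetP[q qI E].
  by case/andP: (key q qI); rewrite -E eqxx.
have := subset_leq_card sub.
by rewrite cardsU1 nin card_imset //; apply: (can_inj (fsw_inv jk)).
Qed.

Lemma tt_inv n (v : 'S_n) (j k : 'I_n) : v * tperm j k * tperm j k = v.
Proof. by rewrite -mulgA tperm2 mulg1. Qed.

Lemma len_lt_iff n (v : 'S_n) (j k : 'I_n) : (j < k)%N ->
  (len (v * tperm j k) < len v)%N = (v^-1 k < v^-1 j)%N.
Proof.
move=> jk; case: (ltngtP (v^-1 j) (v^-1 k)) => h.
- have := len_tperm_lt jk h; lia.
- have := @len_tperm_lt n (v * tperm j k) j k jk.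
  rewrite !invtE tpermL tpermR tt_inv => /(_ h); lia.
- move/val_inj/perm_inj: h => E; move: jk; rewrite E; lia.
Qed.

Lemma len_neq n (v : 'S_n) (j k : 'I_n) : (j < k)%N ->
  len (v * tperm j k) != len v.
Proof.
move=> jk; have := len_lt_iff v jk.
case: (ltngtP (v^-1 j) (v^-1 k)) => h.
- have := len_tperm_lt jk h; lia.
- lia.
- move/val_inj/perm_inj: h => E; move: jk; rewrite E; lia.
Qed.

Lemma edge_sym n (w v u : 'S_n) : moment_edge w v u -> moment_edge w u v.
Proof.
case/and3P => vw uw /existsP[j /existsP[k /andP[jk /eqP E]]].
apply/and3P; split => //; apply/existsP; exists j; apply/existsP; exists k.
by rewrite jk E /lmul_transp tt_inv eqxx.
Qed.

Definition Dr n (w : 'S_n) : rel 'S_n :=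
  fun v u => moment_edge w v u && (len u < len v)%N.

Lemma outdegE n (w x : 'S_n) : bruhat_le x w -> outdeg (Dr w) x = len x.
Proof.
move=> xw; rewrite /outdeg /len.
set Inv := [set p : 'I_n * 'I_n | _].
rewrite -(@card_in_imset _ _ (fun p : 'I_n * 'I_n => x * tperm p.1 p.2) Inv).
  apply: eq_card => u; rewrite inE /Dr.
  apply/andP/imsetP.
    case=> /and3P[_ uw /existsP[j /existsP[k /andP[jk /eqP E]]]].
    rewrite E /lmul_transp len_lt_iff // => h.
    by exists (j, k) => //; rewrite inE /= jk h.
  case=> -[a b]; rewrite inE /= => /andP[ab h] ->.
  have lt : (len (x * tperm a b) < len x)%N by rewrite len_lt_iff.
  split => //; apply/and3P; split => //.
    apply: connect_trans xw; apply: connect1; apply/existsP; exists a; apply/existsP; exists b.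
    by rewrite ab lt /lmul_transp tt_inv eqxx.
  by apply/existsP; exists a; apply/existsP; exists b; rewrite ab eqxx.
move=> [a b] [c d]; rewrite !inE /= => /andP[ab _] /andP[cd _] /mulgI E.
have := congr1 (fun s : 'S_n => s a) E; rewrite /= tpermL.
case: (tcaseL c d a) => [?|?|[? ? ->]]; subst.
- by rewrite tpermL => ->.
- rewrite tpermR => Eb; subst; move: ab cd; lia.
- move=> Eb; subst; move: ab; lia.
Qed.

Theorem mainTheorem3 (n : nat) (w : 'S_n) : palais_smale w.
Proof.
exists (Dr w); split; first split.
- by move=> v u /andP[].
- split.
    move=> v u e; have e' := edge_sym e; rewrite /Dr e e' /=.
    case/and3P: e => _ _ /existsP[j /existsP[k /andP[jk /eqP ->]]].
    have := len_neq v jk; rewrite /lmul_transp; lia.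
  move=> v u /andP[_ h]; apply/negP => /andP[_ h']; lia.
move=> v u /andP[e h]; case/and3P: (e) => vw uw _.
by rewrite !outdegE.
Qed.
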